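(* Let $r\ge1$, $\alpha\ge1$, and let $Y_1,\dots,Y_k$ be i.i.d. nonnegative random variables with $\|Y_1\|_{2r}\le\alpha\|Y_1\|_r$. If $k\ge 4\alpha^{2r}$, then \[ \mathbb{E}\Bigl(\sum_{i=1}^k Y_i^r\Bigr)^{1/r}\ge\frac{1}{128\alpha^2}\,k^{1/r}\|Y_1\|_r . \]
   Context: $\|Y\|_\rho=(\mathbb{E}|Y|^\rho)^{1/\rho}$. *)

(* Defs.v *)
From HB Require Import structures.
From mathcomp Require Import all_boot all_order all_algebra.
From mathcomp Require Import all_classical all_reals all_analysis.
Set Implicit Arguments. Unset Strict Implicit. Unset Printing Implicit Defensive.
Import Order.TTheory GRing.Theory Num.Theory.
Local Open Scope classical_set_scope.
Local Open Scope ring_scope.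

Definition mutually_independent d (T : measurableType d) (R : realType)
  (P : probability T R) (k : nat) (Y : 'I_k -> {RV P >-> R}) : Prop :=
  forall (J : {set 'I_k}) (B : 'I_k -> set R),
    (forall i, measurable (B i)) ->
    P (\bigcap_(i in [set j | j \in J]) (Y i @^-1` B i)) =
    (\prod_(i in J) P (Y i @^-1` B i))%E.

Definition identically_distributed d (T : measurableType d) (R : realType)
  (P : probability T R) (k : nat) (Y : 'I_k -> {RV P >-> R}) : Prop :=
  forall (i j : 'I_k) (A : set R), measurable A ->
    distribution P (Y i) A = distribution P (Y j) A.

Definition rnorm d (T : measurableType d) (R : realType)
  (P : probability T R) (rho : R) (Y : T -> R) : \bar R :=
  Lnorm P rho%:E (EFin \o Y).

(* Main.v *)
Require Import Defs.
From HB Require Import structures.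
From mathcomp Require Import all_boot all_order all_algebra.
From mathcomp Require Import all_classical all_reals all_analysis.
From mathcomp Require Import measurable_realfun.
From mathcomp Require Import ring lra.
Import Order.TTheory GRing.Theory Num.Theory.
Local Open Scope classical_set_scope.
Local Open Scope ring_scope.

Section indep.
Context d (T : measurableType d) (R : realType) (P : probability T R).

Lemma indep_rect k (Y : 'I_k -> {RV P >-> R}) (i j : 'I_k) (A B : set R) :
  mutually_independent Y -> i != j -> measurable A -> measurable B ->
  P (Y i @^-1` A `&` Y j @^-1` B) = (P (Y i @^-1` A) * P (Y j @^-1` B))%E.
Proof.
move=> HI ij mA mB.
have := HI [set i; j]%SET (fun l => if l == i then A else B).
rewrite big_setU1 ?inE //= ?big_set1 eqxx.
have -> : (if j == i then A else B) = B by rewrite eq_sym (negbTE ij).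
move=> <-; last by move=> l; case: ifP.
congr (P _); apply/seteqP; split => w.
- move=> [HA HB] l /=; rewrite !inE => /orP[] /eqP ->; first by rewrite eqxx.
  by rewrite eq_sym (negbTE ij).
- move=> H; split.
  + by have := H i; rewrite /= !inE eqxx /=; apply.
  + by have := H j; rewrite /= !inE eqxx orbT eq_sym (negbTE ij); apply.
Qed.

Lemma indep_mul k (Y : 'I_k -> {RV P >-> R}) (i j : 'I_k) (phi psi : R -> R) :
  mutually_independent Y -> i != j ->
  measurable_fun setT phi -> measurable_fun setT psi ->
  (forall x, 0 <= phi x) -> (forall x, 0 <= psi x) ->
  (\int[P]_w (phi (Y i w) * psi (Y j w))%:E =
   \int[P]_w (phi (Y i w))%:E * \int[P]_w (psi (Y j w))%:E)%E.
Proof.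
move=> HI ij mphi mpsi phi0 psi0.
pose Phi := fun w => (Y i w, Y j w).
have mPhi : measurable_fun setT Phi by exact: measurable_fun_pair.
pose m' := measure_function_pushforward__canonical__measure_function_Measure P mPhi.
pose mu := distribution P (Y i).
pose nu := distribution P (Y j).
pose h := fun z : (R * R)%type => (phi z.1 * psi z.2)%:E.
have mh : measurable_fun [set: (R * R)%type] h.
  apply/measurable_EFinP/measurable_funM.
  - exact: measurableT_comp mphi measurable_fst.
  - exact: measurableT_comp mpsi measurable_snd.
have h0 : forall z, (0 <= h z)%E by move=> z; rewrite lee_fin mulr_ge0.
have E1 : (\int[P]_w (phi (Y i w) * psi (Y j w))%:E = \int[m']_z h z)%E.
  by rewrite ge0_integral_pushforward //= preimage_setT.
rewrite E1.
have E2 : (\int[m']_z h z = \int[mu \x nu]_z h z)%E.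
  apply: eq_measure_integral => A mA _.
  apply/esym; apply: product_measure_unique => // A1 B1 mA1 mB1.
  exact: indep_rect.
rewrite E2 fubini_tonelli1 //.
transitivity (\int[mu]_x ((phi x)%:E * \int[nu]_y (psi y)%:E))%E.
  apply: eq_integral => x _; rewrite /fubini_F /h /=.
  under eq_integral do rewrite EFinM.
  rewrite ge0_integralZl_EFin //.
  - by move=> y _; rewrite lee_fin.
  - exact/measurable_EFinP.
rewrite ge0_integralZr //; last 3 first.
- exact/measurable_EFinP.
- by move=> y _; rewrite lee_fin.
- by apply: integral_ge0 => y _; rewrite lee_fin.
by rewrite /mu /nu !ge0_integral_distribution //; exact/measurable_EFinP.
Qed.

Lemma ident_int k (Y : 'I_k -> {RV P >-> R}) (i j : 'I_k) (phi : R -> R) :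
  identically_distributed Y -> measurable_fun setT phi -> (forall x, 0 <= phi x) ->
  (\int[P]_w (phi (Y i w))%:E = \int[P]_w (phi (Y j w))%:E)%E.
Proof.
move=> HID mphi phi0.
have m1 : measurable_fun setT (EFin \o phi) by exact/measurable_EFinP.
have p1 : forall x, (0 <= (EFin \o phi) x)%E by move=> x; rewrite lee_fin.
rewrite -(ge0_integral_distribution (Y i) m1 p1) -(ge0_integral_distribution (Y j) m1 p1).
apply: eq_measure_integral => A mA _; exact: HID.
Qed.

Lemma rnormE (X : T -> R) p : p != 0 -> (forall x, 0 <= X x) ->
  rnorm P p X = ((\int[P]_x (X x `^ p)%:E) `^ p^-1)%E.
Proof.
move=> p0 X0; rewrite /rnorm unlock /Lnorm; congr (_ `^ _)%E.
by apply: eq_integral => x _; rewrite -[(EFin \o X) x]/((X x)%:E) abse_EFin ger0_norm.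
Qed.
End indep.

Lemma ptwise (R : realType) (z a r : R) : 0 <= z -> 0 < a -> 1 <= r ->
  z <= a / a `^ r^-1 * z `^ r^-1 + (4 * a)^-1 * (z * z).
Proof.
move=> z0 a0 r1.
have r0 : 0 < r by apply: lt_le_trans r1.
pose u := z / a.
have u0 : 0 <= u by rewrite divr_ge0 // ltW.
have zE : z = a * u by rewrite /u mulrC divfK // gt_eqF.
have apos : 0 < a `^ r^-1 by apply: powR_gt0.
rewrite zE powRM ?(ltW a0) // mulrA divfK ?gt_eqF //.
have key : u <= u `^ r^-1 + u * u / 4.
  have [u1|u1] := leP u 1.
  - have [->|upos] := eqVneq u 0; first by rewrite mul0r mul0r addr0 powR_ge0.
    have : u <= u `^ r^-1.
      apply: ger1_powR; first by rewrite u1 andbT lt_neqAle eq_sym upos u0.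
      by rewrite invf_le1.
    move=> h; apply: (le_trans h); rewrite lerDl; apply: divr_ge0 => //.
    exact: mulr_ge0.
  - have h1 : 1 <= u `^ r^-1.
      have ri0 : 0 <= r^-1 by rewrite invr_ge0 ltW.
      have := @ge0_ler_powR R r^-1 ri0 1 u.
      rewrite powR1; apply => //; rewrite ?in_itv /= ?nnegrE ?(ltW u1) //.
    move: h1; set t := u `^ r^-1 => h1.
    have := sqr_ge0 (u - 2); rewrite !expr2 => hh; nra.
have := ler_wpM2l (ltW a0) key.
move=> h; apply: (le_trans h); rewrite mulrDr lerD2l.
rewrite le_eqVlt; apply/orP; left; apply/eqP; field.
by rewrite gt_eqF.
Qed.

Theorem mainTheorem12 (d : measure_display) (T : measurableType d) (R : realType)
  (P : probability T R) (r alpha : R) (k : nat) (Y : 'I_k -> {RV P >-> R})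
  (i0 : 'I_k) :
  1 <= r -> 1 <= alpha ->
  mutually_independent Y -> identically_distributed Y ->
  (forall i x, 0 <= Y i x) ->
  (rnorm P (2 * r) (Y i0) < +oo)%E ->
  (rnorm P (2 * r) (Y i0) <= alpha%:E * rnorm P r (Y i0))%E ->
  4 * alpha `^ (2 * r) <= k%:R ->
  (((128 * alpha ^+ 2)^-1 * k%:R `^ r^-1)%:E * rnorm P r (Y i0) <=
   \int[P]_x ((\sum_(i < k) Y i x `^ r) `^ r^-1)%:E)%E.
Proof.
move=> r1 a1 HI HID Y0 Hfin Hnorm Hk.
have r0 : (0 < r)%R by apply: lt_le_trans r1.
have r2 : (2 * r != 0)%R by rewrite mulf_neq0 // gt_eqF.
have rneq : (r != 0)%R by rewrite gt_eqF.
have mY : forall i, measurable_fun setT (Y i) by move=> i; exact: measurable_funPT.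
pose f i w := (Y i w `^ r)%R.
have mf : forall i, measurable_fun setT (f i).
  by move=> i; exact: measurableT_comp (measurable_powR r) (mY i).
have f0 : forall i w, (0 <= f i w)%R by move=> i w; exact: powR_ge0.
have mpr := measurable_powR r.
have mp2r := measurable_powR (2 * r).
have I2fin : (\int[P]_w (Y i0 w `^ (2 * r))%:E < +oo)%E.
  move: Hfin; rewrite (@rnormE _ _ _ P (Y i0) (2*r) r2 (Y0 i0)) => H.
  rewrite ltey; apply/negP => /eqP Hy; move: H; rewrite Hy poweRyr ?invr_neq0 //.
have I1fin : (\int[P]_w (f i0 w)%:E < +oo)%E.
  apply: (@le_lt_trans _ _ (\int[P]_w ((1 + Y i0 w `^ (2 * r))%:E))%E).
    apply: ge0_le_integral => //.
    - by move=> w _; rewrite lee_fin.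
    - exact/measurable_EFinP.
    - apply/measurable_EFinP/measurable_funD => //.
      exact: measurableT_comp mp2r (mY i0).
    - move=> w _; rewrite lee_fin /f.
      have [y1|y1] := leP (Y i0 w) 1.
      + have h : (Y i0 w `^ r <= 1)%R.
          have := @ge0_ler_powR R r (ltW r0) (Y i0 w) 1.
          rewrite powR1; apply => //; rewrite ?nnegrE //.
        by apply: (le_trans h); rewrite lerDl powR_ge0.
      + have h : (Y i0 w `^ r <= Y i0 w `^ (2 * r))%R.
          by apply: ler_powR; [exact: ltW | lra].
        by apply: (le_trans h); rewrite lerDr.
  under eq_integral do rewrite EFinD.
  rewrite ge0_integralD //.
  - rewrite integral_cst // mul1e; apply: lte_add_pinfty => //.
    by apply: (le_lt_trans (probability_le1 P measurableT)); rewrite ltry.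
  - by move=> w _; rewrite lee_fin powR_ge0.
  - apply/measurable_EFinP; exact: measurableT_comp mp2r (mY i0).
have I1ge0 : (0 <= \int[P]_w (f i0 w)%:E)%E.
  by apply: integral_ge0 => w _; rewrite lee_fin.
have I2ge0 : (0 <= \int[P]_w (Y i0 w `^ (2 * r))%:E)%E.
  by apply: integral_ge0 => w _; rewrite lee_fin powR_ge0.
pose m := fine (\int[P]_w (f i0 w)%:E).
pose s := fine (\int[P]_w (Y i0 w `^ (2 * r))%:E).
have m0 : (0 <= m)%R by apply: fine_ge0.
have s0 : (0 <= s)%R by apply: fine_ge0.
have mE : forall i, (\int[P]_w (f i w)%:E = m%:E)%E.
  move=> i; rewrite /f (@ident_int _ _ _ P k Y i i0 (fun x => x `^ r) HID mpr) //.
  - by rewrite fineK // ge0_fin_numE.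
  - by move=> x; exact: powR_ge0.
have sE : forall i, (\int[P]_w (Y i w `^ (2 * r))%:E = s%:E)%E.
  move=> i; rewrite (@ident_int _ _ _ P k Y i i0 (fun x => x `^ (2 * r)) HID mp2r) //.
  - by rewrite fineK // ge0_fin_numE.
  - by move=> x; exact: powR_ge0.
have rnE : rnorm P r (Y i0) = (m `^ r^-1)%:E.
  rewrite (@rnormE _ _ _ P (Y i0) r rneq (Y0 i0)).
  by have := mE i0; rewrite /f => ->.
have rn2E : rnorm P (2 * r) (Y i0) = (s `^ (2 * r)^-1)%:E.
  rewrite (@rnormE _ _ _ P (Y i0) (2 * r) r2 (Y0 i0)).
  have := sE i0 => ->; exact: poweR_EFin.
clearbody m s.
move: Hnorm; rewrite rnE rn2E -EFinM lee_fin => Hnorm.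
have a0 : (0 <= alpha)%R by apply: le_trans a1.
have Hs : (s <= alpha `^ (2 * r) * (m * m))%R.
  have e1 : s = (s `^ (2 * r)^-1) `^ (2 * r).
    by rewrite -powRrM mulrC divff // powRr1.
  have e2 : (m * m = (m `^ r^-1) `^ (2 * r))%R.
    rewrite -powRrM mulrCA [r^-1 * r]mulrC divff // mulr1.
    by rewrite powR_mulrn // expr2.
  rewrite e1 e2 -powRM ?powR_ge0 //.
  apply: ge0_ler_powR; rewrite ?nnegrE ?powR_ge0 //.
  - by rewrite mulr_ge0 // ltW.
  - by apply: mulr_ge0 => //; exact: powR_ge0.
have [m_eq0|mneq] := eqVneq m 0%R.
  rewrite m_eq0 powR0 ?invr_neq0 // mule0.
  by apply: integral_ge0 => w _; rewrite lee_fin powR_ge0.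
have mpos : (0 < m)%R by rewrite lt_neqAle eq_sym mneq m0.
have kpos : (0 < k%:R :> R)%R by rewrite ltr0n (leq_ltn_trans _ (ltn_ord i0)).
pose Z w := (\sum_(i < k) f i w)%R.
have mZ : measurable_fun setT Z by apply: measurable_sum.
have Z0 : forall w, (0 <= Z w)%R by move=> w; apply: sumr_ge0 => i _.
have EZ : (\int[P]_w (Z w)%:E = (k%:R * m)%:E)%E.
  rewrite /Z; under eq_integral do rewrite -sumEFin.
  rewrite ge0_integral_sum //; last 2 first.
  - by move=> i; exact/measurable_EFinP.
  - by move=> i w _; rewrite lee_fin.
  under eq_bigr do rewrite mE.
  by rewrite sumEFin sumr_const card_ord mulr_natl.
have e2r : (2 * r = r + r)%R by rewrite mulr_natl mulr2n.
have Hij : forall i j, (\int[P]_w (f i w * f j w)%:E <=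
    ((i == j)%:R * s + m * m)%:E)%E.
  move=> i j; have [<-|ij] := eqVneq i j.
  - have ff : forall w, (f i w * f i w = Y i w `^ (2 * r))%R.
      move=> w; rewrite /f e2r powRD //.
      by apply/implyP => /eqP h; exfalso; move: r2; rewrite e2r h eqxx.
    under eq_integral do rewrite ff.
    by rewrite sE mul1r lee_fin lerDl mulr_ge0.
  - rewrite /f (@indep_mul _ _ _ P k Y i j (fun x => x `^ r) (fun x => x `^ r) HI ij mpr mpr) //; last 2 first.
    + by move=> x; exact: powR_ge0.
    + by move=> x; exact: powR_ge0.
    have := mE i; have := mE j; rewrite /f => -> ->.
    by rewrite mul0r add0r EFinM.
have EZ2 : (\int[P]_w (Z w * Z w)%:E <= (k%:R * s + k%:R * k%:R * (m * m))%:E)%E.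
  have ZZ : forall w, (Z w * Z w = \sum_(i < k) \sum_(j < k) f i w * f j w)%R.
    by move=> w; rewrite /Z big_distrl /=; apply: eq_bigr => l _; rewrite big_distrr.
  under eq_integral do rewrite ZZ -sumEFin.
  rewrite ge0_integral_sum //; last 2 first.
  - move=> i; apply/measurable_EFinP; apply: measurable_sum => j.
    exact: measurable_funM.
  - by move=> i w _; rewrite lee_fin; apply: sumr_ge0 => j _; exact: mulr_ge0.
  apply: (@le_trans _ _ (\sum_(i < k) \sum_(j < k) ((i == j)%:R * s + m * m)%:E)%E).
    apply: lee_sum => i _.
    under eq_integral do rewrite -sumEFin.
    rewrite ge0_integral_sum //; last 2 first.
    - by move=> j; apply/measurable_EFinP; exact: measurable_funM.
    - by move=> j w _; rewrite lee_fin; exact: mulr_ge0.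
    by apply: lee_sum => j _; exact: Hij.
  under eq_bigr do rewrite sumEFin.
  rewrite sumEFin lee_fin.
  have inner : forall i : 'I_k, (\sum_(j < k) ((i == j)%:R * s + m * m) = s + k%:R * (m * m))%R.
    move=> i; rewrite big_split /= -big_distrl /= sumr_const card_ord mulr_natl.
    rewrite (bigD1 i) //= eqxx big1 ?addr0 ?mul1r // => j /negPf.
    by rewrite eq_sym => ->.
  under eq_bigr do rewrite inner.
  by rewrite sumr_const card_ord -[(s + _) *+ k]mulr_natl mulrDr mulrA.
pose a := (k%:R * m)%R.
have apos : (0 < a)%R by rewrite mulr_gt0.
pose b := (a `^ r^-1)%R.
have bpos : (0 < b)%R by apply: powR_gt0.
have mZr : measurable_fun setT (fun w => Z w `^ r^-1)%R.
  exact: measurableT_comp (measurable_powR _) mZ.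
have mZZ : measurable_fun setT (fun w => Z w * Z w)%R by exact: measurable_funM.
change (((128 * alpha ^+ 2)^-1 * k%:R `^ r^-1)%:E * (m `^ r^-1)%:E <=
   \int[P]_x ((Z x) `^ r^-1)%:E)%E.
pose W := (\int[P]_x ((Z x) `^ r^-1)%:E)%E.
have W0 : (0 <= W)%E by apply: integral_ge0 => w _; rewrite lee_fin powR_ge0.
have IE : (\int[P]_w ((a / b * Z w `^ r^-1 + (4 * a)^-1 * (Z w * Z w))%:E) =
    (a / b)%:E * W + ((4 * a)^-1)%:E * \int[P]_w (Z w * Z w)%:E)%E.
  under eq_integral do rewrite EFinD [X in (X + _)%E]EFinM [X in (_ + X)%E]EFinM.
  rewrite ge0_integralD //; last 4 first.
  - move=> w _; rewrite -EFinM lee_fin mulr_ge0 ?powR_ge0 //.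
    by rewrite divr_ge0 // ltW.
  - apply: emeasurable_funM => //; exact/measurable_EFinP.
  - move=> w _; rewrite -EFinM lee_fin mulr_ge0 ?mulr_ge0 //.
    by rewrite invr_ge0 mulr_ge0 // ltW.
  - apply: emeasurable_funM => //; exact/measurable_EFinP.
  rewrite ge0_integralZl_EFin //; last 3 first.
  - by move=> w _; rewrite lee_fin powR_ge0.
  - exact/measurable_EFinP.
  - by rewrite divr_ge0 // ltW.
  rewrite ge0_integralZl_EFin //.
  - by move=> w _; rewrite lee_fin mulr_ge0.
  - exact/measurable_EFinP.
  - by rewrite invr_ge0 mulr_ge0 // ltW.
have key : ((k%:R * m)%:E <= (a / b)%:E * W + ((4 * a)^-1)%:E * \int[P]_w (Z w * Z w)%:E)%E.
  rewrite -EZ -IE; apply: ge0_le_integral => //.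
  - by move=> w _; rewrite lee_fin.
  - exact/measurable_EFinP.
  - apply/measurable_EFinP; apply: measurable_funD.
    + exact: measurable_funM.
    + exact: measurable_funM.
  - by move=> w _; rewrite lee_fin; apply: ptwise.
change (((128 * alpha ^+ 2)^-1 * k%:R `^ r^-1)%:E * (m `^ r^-1)%:E <= W)%E.
clearbody W.
case: W W0 IE key => [w| |] // W0 _ key; last by rewrite leey.
rewrite lee_fin in W0.
have key2 : (k%:R * m <= a / b * w + (4 * a)^-1 * (k%:R * s + k%:R * k%:R * (m * m)))%R.
  rewrite -lee_fin; apply: (le_trans key); rewrite EFinD [X in (_ <= X + _)%E]EFinM.
  rewrite [X in (_ <= _ + X)%E]EFinM; apply: leeD2l; apply: lee_wpmul2l => //.
  by rewrite lee_fin invr_ge0 mulr_ge0 // ltW.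
rewrite -EFinM lee_fin -mulrA -powRM ?(ltW kpos) //.
move: key2; rewrite -/a -/b => key2.
set A := alpha `^ (2 * r) in Hk Hs.
have hks : (k%:R * s <= k%:R * (A * (m * m)))%R by rewrite ler_wpM2l // ltW.
have hk2 : (k%:R * (A * (m * m)) * 4 <= k%:R * k%:R * (m * m))%R.
  have mm0 : (0 <= m * m)%R by rewrite mulr_ge0.
  have := ler_wpM2r mm0 Hk; have := ltW kpos; nra.
have hX : (k%:R * s + k%:R * k%:R * (m * m) <= 5 / 4 * a * a)%R.
  rewrite /a; nra.
have hq : ((4 * a)^-1 * (k%:R * s + k%:R * k%:R * (m * m)) <= 5 / 16 * a)%R.
  apply: (le_trans (ler_wpM2l _ hX)); first by rewrite invr_ge0 mulr_ge0 // ltW.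
  rewrite le_eqVlt; apply/orP; left; apply/eqP; field; exact: lt0r_neq0.
have h11 : (11 / 16 * a <= a / b * w)%R by lra.
have h12 : (11 / 16 * b <= w)%R.
  have := ler_wpM2r (_ : (0 <= b / a)%R) h11.
  have e3 : (11 / 16 * a * (b / a) = 11 / 16 * b)%R.
    by field; exact: lt0r_neq0.
  have e4 : (a / b * w * (b / a) = w)%R.
    by field; apply/andP; split; exact: lt0r_neq0.
  rewrite e3 e4; apply; rewrite divr_ge0 // ltW //.
set c := (128 * alpha ^+ 2)^-1.
have al2 : (1 <= alpha ^+ 2)%R by rewrite expr2; nra.
have hc1 : (c * (128 * alpha ^+ 2) = 1)%R.
  by rewrite /c mulVf // gt_eqF // mulr_gt0 // (lt_le_trans _ al2).
have hc0 : (0 <= c)%R by rewrite /c invr_ge0 mulr_ge0 // (le_trans _ al2).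
have hc : (c <= 11 / 16)%R.
  have := ler_wpM2l hc0 al2; nra.
have := ler_wpM2r (ltW bpos) hc.
move=> h; apply: (le_trans _ (le_trans h h12)).
by rewrite /b /a.
Qed.
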